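(* Let $N$ be a continuous fuzzy negation, $U$ a disjunctive uninorm with neutral element $e\in\,]0,1[$, and $I(x,y)=U(N(x),y)$ for $x,y\in[0,1]$. Then the representation of $I$ as a $(U,N)$-implication with a continuous fuzzy negation is not unique if and only if there exists $\alpha\in\,]0,1[$ with $\alpha\neq e$ such that the function $f=U(\cdot,\alpha)$ is continuous and non-decreasing with $f(0)=0$ and $f(1)=1$.
   Context: A fuzzy negation is a non-increasing map $N:[0,1]\to[0,1]$ with $N(0)=1$, $N(1)=0$. A uninorm is a map $U:[0,1]^2\to[0,1]$ that is commutative, associative, non-decreasing in each variable, and has a neutral element $e\in[0,1]$. A uninorm is disjunctive if $U(1,0)=1$. A representation of $I$ as a $(U,N)$-implication with a continuous fuzzy negation is a pair $(U',N')$ with $U'$ a disjunctive uninorm with neutral element in $]0,1[$ and $N'$ a continuous fuzzy negation such that $I(x,y)=U'(N'(x),y)$ for all $x,y\in[0,1]$; the representation is unique if $(U,N)$ is the only such pair. *)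

(* Defs.v *)
(* concrete reals R; all maps are total R -> R (or R -> R -> R)
   and only their behaviour on [0,1] matters. *)
From Stdlib Require Import Reals.
Open Scope R_scope.

Definition in01 (x : R) : Prop := 0 <= x <= 1.

Definition cont01 (f : R -> R) : Prop :=
  forall x, in01 x -> forall eps, 0 < eps ->
    exists delta, 0 < delta /\
      forall y, in01 y -> Rabs (y - x) < delta -> Rabs (f y - f x) < eps.

Definition nondecr01 (f : R -> R) : Prop :=
  forall x y, in01 x -> in01 y -> x <= y -> f x <= f y.

Definition fuzzy_negation (N : R -> R) : Prop :=
  (forall x, in01 x -> in01 (N x)) /\
  (forall x y, in01 x -> in01 y -> x <= y -> N y <= N x) /\
  N 0 = 1 /\ N 1 = 0.

Definition uninorm (U : R -> R -> R) (e : R) : Prop :=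
  in01 e /\
  (forall x y, in01 x -> in01 y -> in01 (U x y)) /\
  (forall x y, in01 x -> in01 y -> U x y = U y x) /\
  (forall x y z, in01 x -> in01 y -> in01 z -> U x (U y z) = U (U x y) z) /\
  (forall x1 x2 y, in01 x1 -> in01 x2 -> in01 y -> x1 <= x2 -> U x1 y <= U x2 y) /\
  (forall x1 x2 y, in01 x1 -> in01 x2 -> in01 y -> x1 <= x2 -> U y x1 <= U y x2) /\
  (forall x, in01 x -> U e x = x).

Definition disjunctive (U : R -> R -> R) : Prop := U 1 0 = 1.

Definition UN_representation (I U' : R -> R -> R) (N' : R -> R) : Prop :=
  (exists e', 0 < e' < 1 /\ uninorm U' e') /\ disjunctive U' /\
  fuzzy_negation N' /\ cont01 N' /\
  (forall x y, in01 x -> in01 y -> I x y = U' (N' x) y).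

Definition unique_UN_representation (I U : R -> R -> R) (N : R -> R) : Prop :=
  UN_representation I U N /\
  forall U' N', UN_representation I U' N' ->
    (forall x y, in01 x -> in01 y -> U' x y = U x y) /\
    (forall x, in01 x -> N' x = N x).

(* Main.v *)
Require Import Defs.
From Stdlib Require Import Reals Lra Classical.
Open Scope R_scope.

Definition clamp (x : R) := Rmax 0 (Rmin 1 x).

Lemma clamp_lip x y : Rabs (clamp y - clamp x) <= Rabs (y - x).
Proof.
  unfold clamp, Rmax, Rmin.
  repeat (destruct (Rle_dec _ _)); unfold Rabs; repeat (destruct (Rcase_abs _)); lra.
Qed.

Lemma clamp_in01 x : in01 (clamp x).
Proof. unfold clamp, in01, Rmax, Rmin; repeat (destruct (Rle_dec _ _)); lra. Qed.

Lemma clamp_id x : in01 x -> clamp x = x.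
Proof. unfold clamp, in01, Rmax, Rmin; intros; repeat (destruct (Rle_dec _ _)); lra. Qed.

Lemma IVT01 g t : cont01 g -> (g 0 - t) * (g 1 - t) <= 0 -> exists x, in01 x /\ g x = t.
Proof.
  intros Hc Hp.
  set (G := fun y => g (clamp y) - t).
  assert (HG : continuity G).
  { intros x. unfold continuity_pt, continue_in, limit1_in, limit_in. intros eps Heps.
    destruct (Hc _ (clamp_in01 x) eps Heps) as [d [Hd Hd']].
    exists d. split; [lra|]. intros y [_ Hy]. simpl in *. unfold Rdist in *.
    unfold G. replace (g (clamp y) - t - (g (clamp x) - t)) with (g (clamp y) - g (clamp x)) by ring.
    apply Hd'. apply clamp_in01. eapply Rle_lt_trans; [apply clamp_lip|exact Hy]. }
  destruct (IVT_cor G 0 1 HG) as [z [Hz HGz]]; [lra| |].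
  - unfold G; rewrite (clamp_id 0), (clamp_id 1) by (unfold in01; lra). exact Hp.
  - exists z. split. unfold in01; lra. unfold G in HGz. rewrite clamp_id in HGz by (unfold in01; lra). lra.
Qed.

Lemma mono_surj_cont f :
  nondecr01 f -> (forall x, in01 x -> in01 (f x)) ->
  (forall t, in01 t -> exists x, in01 x /\ f x = t) -> cont01 f.
Proof.
  intros Hm Hr Hs x Hx eps Heps.
  assert (HR : exists dr, 0 < dr /\ forall y, in01 y -> x <= y -> y < x + dr -> f y - f x < eps).
  { destruct (Rlt_dec (f x) 1) as [Hlt|Hge].
    - destruct (Hs (Rmin (f x + eps/2) 1)) as [x2 [Hx2 Hf2]].
      { pose proof (Hr x Hx). unfold in01 in *. unfold Rmin; destruct (Rle_dec _ _); lra. }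
      assert (Hxx : x < x2).
      { destruct (Rlt_dec x x2) as [h|h]; [exact h|].
        assert (f x2 <= f x) by (apply Hm; auto; lra).
        unfold Rmin in Hf2; destruct (Rle_dec _ _); lra. }
      exists (x2 - x). split; [lra|]. intros y Hy H1 H2.
      assert (f y <= f x2) by (apply Hm; auto; lra).
      assert (Rmin (f x + eps/2) 1 <= f x + eps/2) by apply Rmin_l. lra.
    - exists 1. split; [lra|]. intros y Hy _ _. pose proof (Hr y Hy). unfold in01 in *. lra. }
  assert (HL : exists dl, 0 < dl /\ forall y, in01 y -> y <= x -> x - dl < y -> f x - f y < eps).
  { destruct (Rlt_dec 0 (f x)) as [Hlt|Hge].
    - destruct (Hs (Rmax (f x - eps/2) 0)) as [x1 [Hx1 Hf1]].
      { pose proof (Hr x Hx). unfold in01 in *. unfold Rmax; destruct (Rle_dec _ _); lra. }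
      assert (Hxx : x1 < x).
      { destruct (Rlt_dec x1 x) as [h|h]; [exact h|].
        assert (f x <= f x1) by (apply Hm; auto; lra).
        unfold Rmax in Hf1; destruct (Rle_dec _ _); lra. }
      exists (x - x1). split; [lra|]. intros y Hy H1 H2.
      assert (f x1 <= f y) by (apply Hm; auto; lra).
      assert (f x - eps/2 <= Rmax (f x - eps/2) 0) by apply Rmax_l. lra.
    - exists 1. split; [lra|]. intros y Hy _ _. pose proof (Hr y Hy). unfold in01 in *. lra. }
  destruct HR as [dr [Hdr HR]]. destruct HL as [dl [Hdl HL]].
  exists (Rmin dr dl). split; [apply Rmin_pos; auto|].
  intros y Hy Hyx.
  assert (Rmin dr dl <= dr) by apply Rmin_l. assert (Rmin dr dl <= dl) by apply Rmin_r.
  destruct (Rle_dec x y).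
  - assert (f x <= f y) by (apply Hm; auto).
    assert (f y - f x < eps) by (apply HR; auto; unfold Rabs in Hyx; destruct (Rcase_abs _); lra).
    unfold Rabs; destruct (Rcase_abs _); lra.
  - assert (f y <= f x) by (apply Hm; auto; lra).
    assert (f x - f y < eps) by (apply HL; auto; try lra; unfold Rabs in Hyx; destruct (Rcase_abs _); lra).
    unfold Rabs; destruct (Rcase_abs _); lra.
Qed.

Lemma cont_comp f g : cont01 g -> cont01 f -> (forall x, in01 x -> in01 (g x)) ->
  cont01 (fun x => f (g x)).
Proof.
  intros Hg Hf Hr x Hx eps Heps.
  destruct (Hf (g x) (Hr x Hx) eps Heps) as [d1 [Hd1 H1]].
  destruct (Hg x Hx d1 Hd1) as [d2 [Hd2 H2]].
  exists d2. split; [exact Hd2|]. intros y Hy Hyx. apply H1; auto.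
Qed.

Theorem mainTheorem4 (N : R -> R) (U : R -> R -> R) (e : R) (I : R -> R -> R) :
  fuzzy_negation N -> cont01 N ->
  uninorm U e -> 0 < e < 1 -> disjunctive U ->
  (forall x y, in01 x -> in01 y -> I x y = U (N x) y) ->
  (~ unique_UN_representation I U N <->
   exists alpha, 0 < alpha < 1 /\ alpha <> e /\
     cont01 (fun x => U x alpha) /\ nondecr01 (fun x => U x alpha) /\
     U 0 alpha = 0 /\ U 1 alpha = 1).
Proof.
  intros HN HNc HU He HD HI.
  pose proof HU as HU0.
  destruct HU as [He01 [Ucl [Ucomm [Uassoc [UmL [UmR Uneu]]]]]].
  destruct HN as [Ncl [Nmono [N0 N1]]].
  assert (i0 : in01 0) by (unfold in01; lra).
  assert (i1 : in01 1) by (unfold in01; lra).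
  assert (Nsurj : forall a, in01 a -> exists x, in01 x /\ N x = a).
  { intros a Ha. apply IVT01; auto. rewrite N0, N1. unfold in01 in Ha.
    replace ((1 - a) * (0 - a)) with (- (a * (1 - a))) by ring.
    assert (0 <= a * (1 - a)) by (apply Rmult_le_pos; lra). lra. }
  split.
  - intros Hnu. apply NNPP. intros Hno. apply Hnu. split.
    + split; [exists e; split; auto|]. split; [exact HD|]. split; [unfold fuzzy_negation; auto|]. split; [exact HNc|exact HI].
    + intros U' N' [[e' [He' HU']] [HD' [HN' [HN'c HI']]]].
      destruct HU' as [He'01 [U'cl [U'comm [U'assoc [U'mL [U'mR U'neu]]]]]].
      destruct HN' as [N'cl [N'mono [N'0 N'1]]].
      assert (Key : forall x, in01 x -> U (N x) e' = N' x).
      { intros x Hx. rewrite <- HI by auto. rewrite HI' by auto.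
        rewrite U'comm by auto. apply U'neu; auto. }
      destruct (Req_dec e' e) as [Heq|Hne].
      * subst e'.
        assert (HNN : forall x, in01 x -> N' x = N x).
        { intros x Hx. rewrite <- Key by auto. rewrite Ucomm by auto. apply Uneu; auto. }
        split; [|exact HNN].
        intros a y Ha Hy. destruct (Nsurj a Ha) as [x [Hx Hxa]]. subst a.
        rewrite <- HNN by auto. rewrite <- HI' by auto. rewrite HNN by auto. apply HI; auto.
      * exfalso. apply Hno. exists e'. split; auto. split; auto.
        assert (Hm : nondecr01 (fun x => U x e')).
        { intros a b Ha Hb Hab. apply UmL; auto. }
        split; [|split; [exact Hm|split]].
        -- apply mono_surj_cont; auto.
           intros t Ht.
           assert (exists x, in01 x /\ N' x = t) as [x [Hx Hxt]].
           { apply IVT01; auto. rewrite N'0, N'1. unfold in01 in Ht.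
             replace ((1 - t) * (0 - t)) with (- (t * (1 - t))) by ring.
             assert (0 <= t * (1 - t)) by (apply Rmult_le_pos; lra). lra. }
           exists (N x). split; auto. rewrite Key; auto.
        -- rewrite <- N1 at 1. rewrite Key; auto.
        -- rewrite <- N0 at 1. rewrite Key; auto.
  - intros [a [Ha [Hae [Hfc [Hfm [Hf0 Hf1]]]]]] [Hrep Huniq].
    assert (ia : in01 a) by (unfold in01; lra).
    destruct (IVT01 (fun x => U x a) e Hfc) as [b [Hb Hba]].
    { simpl. rewrite Hf0, Hf1. replace ((0 - e) * (1 - e)) with (- (e * (1 - e))) by ring.
      assert (0 <= e * (1 - e)) by (apply Rmult_le_pos; lra). lra. }
    simpl in Hba.
    assert (Hab : U a b = e) by (rewrite Ucomm; auto).
    set (U' := fun x y => U (U x y) b).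
    set (N' := fun x => U (N x) a).
    assert (Hrep' : UN_representation I U' N').
    { split; [|split; [|split; [|split]]].
      - exists a. split; [exact Ha|]. unfold uninorm, U'.
        split; [exact ia|]. split; [intros; auto|]. split.
        { intros x y Hx Hy. rewrite (Ucomm x y); auto. }
        split; [|split; [|split]].
        + intros x y z Hx Hy Hz.
          rewrite (Uassoc x (U y z) b) by auto.
          rewrite (Uassoc x y z) by auto.
          rewrite <- (Uassoc (U x y) b z) by auto.
          rewrite (Ucomm b z) by auto.
          rewrite (Uassoc (U x y) z b) by auto. reflexivity.
        + intros x1 x2 y H1 H2 Hy H12. apply UmL; auto.
        + intros x1 x2 y H1 H2 Hy H12. apply UmL; auto.
        + intros x Hx. rewrite (Ucomm a x) by auto. rewrite <- Uassoc by auto.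
          rewrite Hab. rewrite Ucomm by auto. apply Uneu; auto.
      - unfold disjunctive, U'. unfold disjunctive in HD. rewrite HD.
        assert (U 1 0 <= U 1 b) by (apply UmR; auto; unfold in01 in Hb; lra).
        pose proof (Ucl 1 b i1 Hb). unfold in01 in *. lra.
      - unfold fuzzy_negation, N'. split; [intros; auto|]. split.
        + intros x y Hx Hy Hxy. apply UmL; auto.
        + rewrite N0, N1. split; auto.
      - unfold N'. apply (cont_comp (fun t => U t a) N); auto.
      - intros x y Hx Hy. unfold U', N'. rewrite HI by auto.
        rewrite <- (Uassoc (N x) a y) by auto.
        rewrite (Ucomm a y) by auto.
        rewrite (Uassoc (N x) y a) by auto.
        rewrite <- (Uassoc (U (N x) y) a b) by auto.
        rewrite Hab. rewrite (Ucomm (U (N x) y) e) by auto. rewrite Uneu; auto. }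
    destruct (Huniq U' N' Hrep') as [HU'eq _].
    specialize (HU'eq a e ia He01). unfold U' in HU'eq.
    assert (Hae' : U a e = a) by (rewrite Ucomm by auto; apply Uneu; auto).
    rewrite Hae' in HU'eq. rewrite Hab in HU'eq.
    apply Hae. symmetry. exact HU'eq.
Qed.
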